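(* Under the setting, model (M) and assumptions (A1)–(A4) described in the context, fix $s\in S$, $h_q\in\mathcal H$, let $B=\big(E[\hat h(s,h_q)]-g(s,h_q)E[\hat f(s,h_q)]\big)/E[\hat f(s,h_q)]$, and suppose $\liminf_{NT\to\infty}E[\hat f(s,h_q)]>0$. Then $\hat g(s,h_q)-g(s,h_q)-B\to 0$ in probability as $NT\to\infty$.
   Context: Setting. For each $N$ (number of nodes) and $T$ (number of timesteps) one observes random directed graphs $G_1,\dots,G_T$ on $\{1,\dots,N\}$; $p\ge1$ is a fixed lag, constant in $N,T$. The local neighborhood $N_t(i)$ of node $i$ in $G_t$ is the set of nodes within 2 hops of $i$ with all edges among them. Each node pair $(i,j)$ at time $t$ has a pair-feature $g_t(i,j)$ in a fixed finite set $S$. For $s\in S$, $n_{i,t}(s)$ is the number of node pairs in $N_t(i)$ with pair-feature $s$ at time $t$, and $n^+_{i,t}(s)$ the number of those joined by an edge at time $t+1$. The datacube of $i$ at time $t$ is $h_{i,t}=\{(n_{i,t-1}(s),n^+_{i,t-1}(s)):s\in S\}$. Model (M): there is an unknown $g:S\times\mathcal H\to[0,1]$ with $E[n^+_{i,t+1}(s)\mid h_{i,t},n_{i,t+1}(s)]=n_{i,t+1}(s)g(s,h_{i,t})$. Kernel: $K_b(h,h')=b^{D(h,h')}$, $0<b<1$, with $D\ge0$ the sum over $s\in S$ of total variation distances between $\mathcal N(\hat p_s,\hat p_s(1-\hat p_s)/n(s))$ and $\mathcal N(\hat p'_s,\hat p'_s(1-\hat p'_s)/n'(s))$, $\hat p_s=n^+(s)/n(s)$;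 assumed $D(h,h')=0$ iff $h=h'$. Estimator: $\hat h(s,h_q)=\frac{1}{N(T-p-2)}\sum_{t=p}^{T-2}\sum_{i=1}^N K_b(h_{i,t},h_q)n^+_{i,t+1}(s)$, $\hat f(s,h_q)=\frac{1}{N(T-p-2)}\sum_{t=p}^{T-2}\sum_{i=1}^N K_b(h_{i,t},h_q)n_{i,t+1}(s)$, $\hat g=\hat h/\hat f$ (when $\hat f>0$). (A1): neighborhood sizes bounded by $M$ independent of $N,T$, so datacubes and counts lie in a fixed finite set ($\mathcal H$ = set of possible datacubes). (A2): $b=b_{N,T}\to0$ as $NT\to\infty$. Stacked graph and distance: stack $G_1,\dots,G_T$, joining node $i$ at time $t$ to node $i$ at times $t\pm1$; $\mathrm{dist}((i,t),(i',t'))$ is the shortest-path length in the stacked graph between any node of the datacube of $(i,t)$ and any node of that of $(i',t')$. (A3) Strong mixing: $\alpha(k)=\sup\{|P(A\cap B)-P(A)P(B)|:A\in\mathcal F(i,t),B\in\mathcal F(i',t'),\mathrm{dist}\ge k\}$, where $\mathcal F(i,t)$ is generated by the datacube of $(i,t)$ and its associated counts, $\alpha$ independent of $N,T$, and $\sum_{k\ge1}\alpha(k)k^{\rho-1}<\infty$ for the bounded intrinsic dimensionality $\rho$. (A4) Growth: a constant $C$ independent of $N,T$ bounds, for every $(i,t)$, the number of $(i',t')$ at $\mathrm{dist}=0$ by $C$ and at $\mathrm{dist}=d\ge1$ by $Cd^{\rho-1}$. *)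

(* Defs.v *)
From Stdlib Require Import Reals.
From HB Require Import structures.
From mathcomp Require Import all_boot.
Set Implicit Arguments. Unset Strict Implicit. Unset Printing Implicit Defensive.

Local Open Scope R_scope.

(* A datacube: for each pair-feature s, the pair (n(s), n^+(s)). *)
Definition cube (S : finType) := {ffun S -> nat * nat}.

(* Hops ignore edge direction. *)
Definition und N (G : rel 'I_N) : rel 'I_N := fun i j => G i j || G j i.

Definition nbhd N (G : rel 'I_N) (i : 'I_N) : {set 'I_N} :=
  [set j | [|| j == i, und G i j | [exists k, und G i k && und G k j]]].

Definition n_cnt N (S : finType) (G : nat -> rel 'I_N) (f : nat -> 'I_N -> 'I_N -> S)
  (i : 'I_N) (t : nat) (s : S) : nat :=
  #|[set jk : 'I_N * 'I_N | [&& jk.1 \in nbhd (G t) i, jk.2 \in nbhd (G t) i,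
                               jk.1 != jk.2 & f t jk.1 jk.2 == s]]|.

Definition nplus N (S : finType) (G : nat -> rel 'I_N) (f : nat -> 'I_N -> 'I_N -> S)
  (i : 'I_N) (t : nat) (s : S) : nat :=
  #|[set jk : 'I_N * 'I_N | [&& jk.1 \in nbhd (G t) i, jk.2 \in nbhd (G t) i,
                               jk.1 != jk.2, f t jk.1 jk.2 == s & G t.+1 jk.1 jk.2]]|.

Definition datacube N (S : finType) (G : nat -> rel 'I_N) (f : nat -> 'I_N -> 'I_N -> S)
  (i : 'I_N) (t : nat) : cube S :=
  [ffun s => (n_cnt G f i t.-1 s, nplus G f i t.-1 s)].

Definition Esp (Om : finType) (P : Om -> R) (X : Om -> R) : R :=
  \big[Rplus/0]_(w : Om) (P w * X w).

Definition Prob (Om : finType) (P : Om -> R) (A : pred Om) : R :=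
  \big[Rplus/0]_(w : Om | A w) P w.

Definition is_prob (Om : finType) (P : Om -> R) : Prop :=
  (forall w, 0 <= P w) /\ \big[Rplus/0]_(w : Om) P w = 1.

Definition Rltb (x y : R) : bool := if Rlt_dec x y then true else false.

Definition gpdf (m v x : R) : R := exp (- ((x - m) ^ 2) / (2 * v)) / sqrt (2 * PI * v).

(* TV distance between N(m1,v1) and N(m2,v2), v1,v2 > 0:
   (1/2) * integral over R of |pdf1 - pdf2| (as limit of integrals over [-k,k]). *)
Definition tv_gauss_is (m1 v1 m2 v2 d : R) : Prop :=
  exists pr : forall k : nat,
      Riemann_integrable (fun x => Rabs (gpdf m1 v1 x - gpdf m2 v2 x)) (- INR k) (INR k),
    Un_cv (fun k => RiemannInt (pr k)) (2 * d).

(* d is the TV distance between N(p1, p1(1-p1)/n1) and N(p2, p2(1-p2)/n2),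
   p_j = k_j / n_j; a zero variance means a Dirac mass; n = 0 (no pair, p undefined)
   is treated as a separate "empty" law (at TV distance 1 from every other law). *)
Definition tv_is (n1 k1 n2 k2 : nat) (d : R) : Prop :=
  match n1, n2 with
  | O, O => d = 0
  | O, _ => d = 1
  | _, O => d = 1
  | _, _ =>
    let p1 := INR k1 / INR n1 in let p2 := INR k2 / INR n2 in
    let v1 := p1 * (1 - p1) / INR n1 in let v2 := p2 * (1 - p2) / INR n2 in
    if Req_EM_T v1 0 then
      (if Req_EM_T v2 0 then d = (if Req_EM_T p1 p2 then 0 else 1) else d = 1)
    else if Req_EM_T v2 0 then d = 1 else tv_gauss_is p1 v1 p2 v2 d
  end.

Definition D_is (S : finType) (h h' : cube S) (dv : R) : Prop :=
  exists ds : S -> R,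
    (forall s, tv_is (h s).1 (h s).2 (h' s).1 (h' s).2 (ds s)) /\
    dv = \big[Rplus/0]_(s : S) ds s.

Definition Kb (S : finType) (D : cube S -> cube S -> R) (b : R) (h h' : cube S) : R :=
  Rpower b (D h h').

Definition hhat N T p (S : finType) (G : nat -> rel 'I_N) (f : nat -> 'I_N -> 'I_N -> S)
  (D : cube S -> cube S -> R) (b : R) (s : S) (hq : cube S) : R :=
  / (INR N * (INR T - INR p - 2)) *
  \big[Rplus/0]_(p <= t < T.-1) \big[Rplus/0]_(i < N)
     (Kb D b (datacube G f i t) hq * INR (nplus G f i t.+1 s)).

Definition fhat N T p (S : finType) (G : nat -> rel 'I_N) (f : nat -> 'I_N -> 'I_N -> S)
  (D : cube S -> cube S -> R) (b : R) (s : S) (hq : cube S) : R :=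
  / (INR N * (INR T - INR p - 2)) *
  \big[Rplus/0]_(p <= t < T.-1) \big[Rplus/0]_(i < N)
     (Kb D b (datacube G f i t) hq * INR (n_cnt G f i t.+1 s)).

(* Node (i,t) of the stacked graph of G_0..G_T. *)
Definition sadj N T (G : nat -> rel 'I_N) (u v : 'I_N * nat) : Prop :=
  (u.2 <= T)%N /\ (v.2 <= T)%N /\
  ((u.2 = v.2 /\ und (G u.2) u.1 v.1) \/ (u.1 = v.1 /\ (v.2 = u.2.+1 \/ u.2 = v.2.+1))).

Fixpoint within N T (G : nat -> rel 'I_N) (n : nat) (u v : 'I_N * nat) : Prop :=
  match n with
  | O => u = v
  | n'.+1 => within T G n' u v \/ exists w, sadj T G u w /\ within T G n' w v
  end.

(* nodes of the datacube of (i,t): N_{t-1}(i) at times t-1 and t *)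
Definition footprint N (G : nat -> rel 'I_N) (x u : 'I_N * nat) : Prop :=
  u.1 \in nbhd (G x.2.-1) x.1 /\ (u.2 = x.2.-1 \/ u.2 = x.2).

(* dist(x,y) >= k, for every realization of positive probability *)
Definition dist_ge N T (Om : finType) (P : Om -> R) (G : Om -> nat -> rel 'I_N)
  (x y : 'I_N * nat) (k : nat) : Prop :=
  forall w, 0 < P w -> forall u v l, footprint (G w) x u -> footprint (G w) y v ->
    (l < k)%N -> ~ within T (G w) l u v.

Definition dist_eq N T (Om : finType) (P : Om -> R) (G : Om -> nat -> rel 'I_N)
  (x y : 'I_N * nat) (d : nat) : Prop :=
  dist_ge T P G x y d /\ ~ dist_ge T P G x y d.+1.

(* datacube indices (i,t) for which datacube and associated counts exist *)
Definition valid N T (x : 'I_N * nat) : Prop := (1 <= x.2)%N /\ (x.2 + 2 <= T)%N.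

(* F(i,t)-measurable event: a function of the datacube of (i,t) and its counts
   (n_{i,t+1}(s), n^+_{i,t+1}(s))_s, i.e. of datacube (i,t+2). *)
Definition Fmeas N (S : finType) (Om : finType) (G : Om -> nat -> rel 'I_N)
  (f : Om -> nat -> 'I_N -> 'I_N -> S) (x : 'I_N * nat) (A : pred Om) : Prop :=
  forall w w',
    (datacube (G w) (f w) x.1 x.2, datacube (G w) (f w) x.1 x.2.+2) =
    (datacube (G w') (f w') x.1 x.2, datacube (G w') (f w') x.1 x.2.+2) ->
    A w = A w'.

(* Main.v *)
Require Import Defs.
From Stdlib Require Import Reals.
From HB Require Import structures.
From mathcomp Require Import all_boot.
From Stdlib Require Import Lra ClassicalEpsilon.
From mathcomp Require Import zify.
Set Warnings "-notation-overridden -redundant-canonical-projection".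
Local Open Scope R_scope.


HB.instance Definition _ := Monoid.isComLaw.Build R 0 Rplus
  (fun a b c => esym (Rplus_assoc a b c)) Rplus_comm Rplus_0_l.


Section Sums.
Variable I : Type.

Lemma sum_mkcond (r : seq I) (P : pred I) (F : I -> R) :
  \big[Rplus/0]_(i <- r | P i) F i = \big[Rplus/0]_(i <- r) (if P i then F i else 0).
Proof.
elim: r => [|x r IH]; rewrite ?big_nil ?big_cons //.
case: (P x); rewrite IH //; ring.
Qed.

Lemma sum_mulr (a : R) (r : seq I) (P : pred I) (F : I -> R) :
  a * \big[Rplus/0]_(i <- r | P i) F i = \big[Rplus/0]_(i <- r | P i) (a * F i).
Proof.
elim: r => [|x r IH]; rewrite ?big_nil ?big_cons; first ring.
case: (P x); rewrite -IH; ring.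
Qed.

Lemma sum_mulrP (a : R) (r : seq I) (F : I -> R) :
  a * \big[Rplus/0]_(i <- r) F i = \big[Rplus/0]_(i <- r) (a * F i).
Proof.
elim: r => [|x r IH]; rewrite ?big_nil ?big_cons; first ring.
rewrite -IH; ring.
Qed.

Lemma sum_mull (a : R) (r : seq I) (P : pred I) (F : I -> R) :
  \big[Rplus/0]_(i <- r | P i) F i * a = \big[Rplus/0]_(i <- r | P i) (F i * a).
Proof.
rewrite Rmult_comm sum_mulr; apply: eq_bigr => i _; ring.
Qed.

Lemma sum_mullP (a : R) (r : seq I) (F : I -> R) :
  \big[Rplus/0]_(i <- r) F i * a = \big[Rplus/0]_(i <- r) (F i * a).
Proof.
rewrite Rmult_comm sum_mulrP; apply: eq_bigr => i _; ring.
Qed.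

Lemma sum_le (r : seq I) (P : pred I) (F G : I -> R) :
  (forall i, P i -> F i <= G i) ->
  \big[Rplus/0]_(i <- r | P i) F i <= \big[Rplus/0]_(i <- r | P i) G i.
Proof.
move=> H; apply: (big_ind2 (fun x y => x <= y)) => //; first lra.
move=> *; lra.
Qed.

Lemma sum_ge0 (r : seq I) (P : pred I) (F : I -> R) :
  (forall i, P i -> 0 <= F i) -> 0 <= \big[Rplus/0]_(i <- r | P i) F i.
Proof.
move=> H; apply: (big_ind (fun x => 0 <= x)) => //; first lra.
move=> *; lra.
Qed.

Lemma sum_abs (r : seq I) (P : pred I) (F : I -> R) :
  Rabs (\big[Rplus/0]_(i <- r | P i) F i) <= \big[Rplus/0]_(i <- r | P i) Rabs (F i).
Proof.
apply: (big_ind2 (fun x y => Rabs x <= y)).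
- rewrite Rabs_R0; lra.
- move=> x1 x2 y1 y2 h1 h2. apply: Rle_trans (Rabs_triang _ _) _; lra.
- move=> i _; lra.
Qed.

Lemma sum_opp (r : seq I) (P : pred I) (F : I -> R) :
  \big[Rplus/0]_(i <- r | P i) (- F i) = - \big[Rplus/0]_(i <- r | P i) F i.
Proof.
elim: r => [|x r IH]; rewrite ?big_nil ?big_cons; first ring.
case: (P x); rewrite IH; ring.
Qed.

Lemma sum_oppP (r : seq I) (F : I -> R) :
  \big[Rplus/0]_(i <- r) (- F i) = - \big[Rplus/0]_(i <- r) F i.
Proof.
elim: r => [|x r IH]; rewrite ?big_nil ?big_cons; first ring.
rewrite IH; ring.
Qed.

Lemma sum_const (r : seq I) (P : pred I) (c : R) :
  \big[Rplus/0]_(i <- r | P i) c = INR (count P r) * c.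
Proof.
elim: r => [|x r IH]; rewrite ?big_nil ?big_cons; first (simpl; ring).
have -> : count P (x :: r) = (P x + count P r)%N by [].
case: (P x); rewrite IH ?add1n ?add0n ?S_INR; ring.
Qed.

Lemma sum_ind_const (r : seq I) (P : pred I) (c : R) :
  \big[Rplus/0]_(i <- r) (if P i then c else 0) = INR (count P r) * c.
Proof. by rewrite -sum_mkcond sum_const. Qed.

Lemma sum_add (r : seq I) (P : pred I) (F G : I -> R) :
  \big[Rplus/0]_(i <- r | P i) (F i + G i) =
  \big[Rplus/0]_(i <- r | P i) F i + \big[Rplus/0]_(i <- r | P i) G i.
Proof.
elim: r => [|x r IH]; rewrite ?big_nil ?big_cons; first ring.
case: (P x); rewrite IH; ring.
Qed.

Lemma sum_addP (r : seq I) (F G : I -> R) :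
  \big[Rplus/0]_(i <- r) (F i + G i) =
  \big[Rplus/0]_(i <- r) F i + \big[Rplus/0]_(i <- r) G i.
Proof.
elim: r => [|x r IH]; rewrite ?big_nil ?big_cons; first ring.
rewrite IH; ring.
Qed.



End Sums.

Lemma sum_exch (I J : Type) (r : seq I) (s : seq J) (F : I -> J -> R) :
  \big[Rplus/0]_(i <- r) \big[Rplus/0]_(j <- s) F i j =
  \big[Rplus/0]_(j <- s) \big[Rplus/0]_(i <- r) F i j.
Proof.
elim: r => [|x r IH]; rewrite ?big_nil ?big_cons.
  by elim: s => [|y s IHs]; rewrite ?big_nil ?big_cons // big_nil -IHs; ring.
by rewrite IH -sum_addP; apply: eq_bigr => j _; rewrite big_cons.
Qed.




Section Prob.
Variable Om : finType.
Variable P : Om -> R.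
Hypothesis HP : is_prob P.

Definition indb (b : bool) : R := if b then 1 else 0.

Lemma P_ge0 w : 0 <= P w. Proof. by case: HP. Qed.

Lemma Esp_ext (X Y : Om -> R) : (forall w, 0 < P w -> X w = Y w) -> Esp P X = Esp P Y.
Proof.
move=> H; rewrite /Esp; apply: eq_bigr => w _.
case: (Rle_lt_or_eq_dec _ _ (P_ge0 w)) => [h|<-]; last ring.
by rewrite H.
Qed.

Lemma Esp_le (X Y : Om -> R) : (forall w, 0 < P w -> X w <= Y w) -> Esp P X <= Esp P Y.
Proof.
move=> H; rewrite /Esp; apply: sum_le => w _.
case: (Rle_lt_or_eq_dec _ _ (P_ge0 w)) => [h|<-]; last lra.
apply: Rmult_le_compat_l; [lra|exact: H].
Qed.

Lemma Esp_add (X Y : Om -> R) : Esp P (fun w => X w + Y w) = Esp P X + Esp P Y.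
Proof. rewrite /Esp -sum_addP; apply: eq_bigr => w _; ring. Qed.

Lemma Esp_scal (c : R) (X : Om -> R) : Esp P (fun w => c * X w) = c * Esp P X.
Proof. rewrite /Esp sum_mulrP; apply: eq_bigr => w _; ring. Qed.

Lemma Esp_const (c : R) : Esp P (fun _ => c) = c.
Proof. rewrite /Esp -sum_mullP; case: HP => _ ->; ring. Qed.

Lemma Esp_sum (J : Type) (r : seq J) (Z : J -> Om -> R) :
  Esp P (fun w => \big[Rplus/0]_(x <- r) Z x w) = \big[Rplus/0]_(x <- r) Esp P (Z x).
Proof.
rewrite /Esp.
under eq_bigr do rewrite sum_mulrP.
by rewrite sum_exch.
Qed.

Lemma Esp_ind (A : pred Om) : Esp P (fun w => indb (A w)) = Prob P A.
Proof.
rewrite /Esp /Prob [RHS]sum_mkcond; apply: eq_bigr => w _.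
rewrite /indb; case: (A w); ring.
Qed.

Lemma Prob_le_Esp (A : pred Om) (Y : Om -> R) : (forall w, indb (A w) <= Y w) -> Prob P A <= Esp P Y.
Proof. move=> H; rewrite -Esp_ind; apply: Esp_le => w _; exact: H. Qed.

Lemma cov_expand (X Y : Om -> R) :
  Esp P (fun w => (X w - Esp P X) * (Y w - Esp P Y)) =
  Esp P (fun w => X w * Y w) - Esp P X * Esp P Y.
Proof.
set ex := Esp P X; set ey := Esp P Y.
rewrite (@Esp_ext _ (fun w => X w * Y w + ((-ex) * Y w + ((-ey) * X w + ex*ey))));
  last by move=> w _; ring.
rewrite !Esp_add !Esp_scal Esp_const -/ex -/ey; ring.
Qed.

Lemma Esp_repr (J : finType) (a : J -> R) (E : J -> pred Om) (X : Om -> R) :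
  (forall w, 0 < P w -> X w = \big[Rplus/0]_(j : J) (a j * indb (E j w))) ->
  Esp P X = \big[Rplus/0]_(j : J) (a j * Prob P (E j)).
Proof.
move=> H; rewrite (@Esp_ext _ _ H) Esp_sum; apply: eq_bigr => j _.
by rewrite Esp_scal Esp_ind.
Qed.

Lemma cov_repr (J : finType) (a b : J -> R) (E F : J -> pred Om) (X Y : Om -> R) :
  (forall w, 0 < P w -> X w = \big[Rplus/0]_(j : J) (a j * indb (E j w))) ->
  (forall w, 0 < P w -> Y w = \big[Rplus/0]_(j : J) (b j * indb (F j w))) ->
  Esp P (fun w => (X w - Esp P X) * (Y w - Esp P Y)) =
  \big[Rplus/0]_(j : J) \big[Rplus/0]_(k : J)
     (a j * b k * (Prob P (predI (E j) (F k)) - Prob P (E j) * Prob P (F k))).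
Proof.
move=> HX HY; rewrite cov_expand (@Esp_repr J a E X HX) (@Esp_repr J b F Y HY).
rewrite (@Esp_ext _ (fun w => \big[Rplus/0]_(j : J) \big[Rplus/0]_(k : J)
            (a j * b k * indb (predI (E j) (F k) w)))); last first.
  move=> w Pw; rewrite (HX w Pw) (HY w Pw) sum_mullP; apply: eq_bigr => j _.
  rewrite sum_mulrP; apply: eq_bigr => k _.
  rewrite /indb /=; case: (E j w); case: (F k w) => /=; ring.
rewrite Esp_sum sum_mullP /Rminus -sum_oppP -sum_addP.
apply: eq_bigr => j _.
rewrite Esp_sum sum_mulrP -sum_oppP -sum_addP; apply: eq_bigr => k _.
rewrite Esp_scal Esp_ind; ring.
Qed.

Lemma var_expand (J : Type) (r : seq J) (c0 : R) (Z : J -> Om -> R) :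
  Esp P (fun w => (c0 * \big[Rplus/0]_(x <- r) Z x w
                   - Esp P (fun w => c0 * \big[Rplus/0]_(x <- r) Z x w)) ^ 2) =
  c0 ^ 2 * \big[Rplus/0]_(x <- r) \big[Rplus/0]_(y <- r)
     Esp P (fun w => (Z x w - Esp P (Z x)) * (Z y w - Esp P (Z y))).
Proof.
rewrite Esp_scal Esp_sum.
rewrite (@Esp_ext _ (fun w => c0 ^ 2 * \big[Rplus/0]_(x <- r) \big[Rplus/0]_(y <- r)
      ((Z x w - Esp P (Z x)) * (Z y w - Esp P (Z y))))); last first.
  move=> w _.
  have -> : c0 * \big[Rplus/0]_(x <- r) Z x w - c0 * \big[Rplus/0]_(x <- r) Esp P (Z x)
     = c0 * \big[Rplus/0]_(x <- r) (Z x w - Esp P (Z x)).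
    by rewrite sum_addP sum_oppP; ring.
  rewrite Rpow_mult_distr; congr (_ * _).
  rewrite /= Rmult_1_r sum_mullP; apply: eq_bigr => x _.
  by rewrite sum_mulrP.
rewrite Esp_scal Esp_sum; congr (_ * _); apply: eq_bigr => x _.
by rewrite Esp_sum.
Qed.

End Prob.


Lemma within_time N T (G : nat -> rel 'I_N) l (u v : 'I_N * nat) :
  within T G l u v -> (v.2 <= u.2 + l)%N /\ (u.2 <= v.2 + l)%N.
Proof.
elim: l u => [|l IH] u /=.
  by move=> ->; rewrite !addn0.
case=> [/IH [h1 h2]|[w [Hs /IH [h1 h2]]]].
  by split; rewrite addnS ltnW // ltnS.
move: h1 h2; case: Hs => _ [_ [[e _]|[_ [e|e]]]]; rewrite ?e; lia.
Qed.

Lemma within_chain N T (G : nat -> rel 'I_N) (i : 'I_N) l a :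
  (a + l <= T)%N -> within T G l (i, a) (i, (a + l)%N).
Proof.
elim: l a => [|l IH] a /=; first by rewrite addn0.
move=> H; right; exists (i, a.+1); split.
  split; first by (simpl; lia).
  split; first by (simpl; lia).
  by right; split => //; left.
by rewrite addnS -addSn; apply: IH; lia.
Qed.

Lemma exists_pos (Om : finType) (P : Om -> R) : is_prob P -> exists w, 0 < P w.
Proof.
case=> H0 H1; apply: NNPP => hn.
have : \big[Rplus/0]_(w : Om) P w <= 0.
  apply: Rle_trans (@sum_le _ _ _ _ (fun _ => 0) _) _.
    move=> w _; apply: Rnot_lt_le => hw; apply: hn; by exists w.
  rewrite sum_const; lra.
lra.
Qed.

Lemma far_pair N T (Om : finType) (P : Om -> R) (G : Om -> nat -> rel 'I_N) (i : 'I_N) k :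
  dist_ge T P G (i, 1%N) (i, (k + 2)%N) k.
Proof.
move=> w _ u v l [_ Hu] [_ Hv] Hl /within_time [h1 _].
move: Hu Hv => /= Hu Hv.
case: Hu => Hu; case: Hv => Hv; rewrite Hu Hv in h1; lia.
Qed.

Lemma near_pair N T (Om : finType) (P : Om -> R) (G : Om -> nat -> rel 'I_N) (i : 'I_N) k :
  is_prob P -> (k + 4 <= T)%N -> ~ dist_ge T P G (i, 1%N) (i, (k + 2)%N) k.+1.
Proof.
move=> /exists_pos [w Pw] HT H.
apply: (H w Pw (i, 1%N) (i, (1 + k)%N) k).
- split; first by rewrite /nbhd inE /= eqxx.
  by right.
- split; first by rewrite /nbhd inE /= eqxx.
  left; rewrite /=; lia.
- exact: ltnSn.
- by apply: within_chain; lia.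
Qed.


Lemma RiemannInt_ge0 (f : R -> R) a b (pr : Riemann_integrable f a b) :
  a <= b -> (forall x, 0 <= f x) -> 0 <= RiemannInt pr.
Proof.
move=> hab hf.
have pr0 := Riemann_integrable_scal 0 pr.
have h0 : RiemannInt pr0 = 0.
  have := RiemannInt_const_bound (l := 0) (u := 0) pr0 hab.
  move=> H; have [h1 h2] : 0 * (b - a) <= RiemannInt pr0 <= 0 * (b - a).
    by apply: H => x _; lra.
  lra.
rewrite -h0; apply: RiemannInt_P19 => // x _; have := hf x; lra.
Qed.

Lemma tv_nonneg n1 k1 n2 k2 d : tv_is n1 k1 n2 k2 d -> 0 <= d.
Proof.
rewrite /tv_is.
case: n1 => [|n1]; case: n2 => [|n2] //; try (move=> ->; lra).

repeat (case: Req_dec_T => _ /=); try (move=> ->; lra).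
case=> pr Hcv.
suff : 0 <= 2 * d by lra.
refine (@Rle_cv_lim (fun _ => 0) _ 0 (2 * d) _ _ Hcv).
- move=> k; apply: RiemannInt_ge0; first by have := pos_INR k; lra.
  move=> x; exact: Rabs_pos.
- move=> e he; exists 0%N => n _; rewrite /R_dist Rminus_0_r Rabs_R0; lra.
Qed.

Lemma D_nonneg (S : finType) (h h' : cube S) dv : D_is h h' dv -> 0 <= dv.
Proof.
case=> ds [H ->]; apply: sum_ge0 => s _; exact: tv_nonneg (H s).
Qed.

Lemma exp_le_mono x y : x <= y -> exp x <= exp y.
Proof.
case/Rle_lt_or_eq_dec => [h|->]; last lra.
by apply: Rlt_le; apply: exp_increasing.
Qed.

Lemma Rpower_in01 b d : 0 < b < 1 -> 0 <= d -> 0 <= Rpower b d <= 1.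
Proof.
move=> hb hd; rewrite /Rpower; split; first by apply: Rlt_le; apply: exp_pos.
have : ln b < 0 by rewrite -ln_1; apply: ln_increasing; lra.
move=> hl; rewrite -exp_0; apply: exp_le_mono; nra.
Qed.

Lemma ln_ge0 x : 1 <= x -> 0 <= ln x.
Proof.
case/Rle_lt_or_eq_dec => [h|<-]; last by rewrite ln_1; lra.
by rewrite -ln_1; apply: Rlt_le; apply: ln_increasing; lra.
Qed.

Lemma Rpower_ge1 x y : 1 <= x -> 0 <= y -> 1 <= Rpower x y.
Proof.
move=> hx hy; rewrite /Rpower -exp_0; apply: exp_le_mono.
have := ln_ge0 _ hx; nra.
Qed.

Lemma rho_ge1 C rho :
  (forall k : nat, (1 <= k)%N -> 1 <= C * Rpower (INR k) (rho - 1)) -> 1 <= rho.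
Proof.
move=> H; apply: Rnot_lt_le => hr.
case: (Rle_or_lt C 0) => hC.
  have := H 1%N isT; have : 0 < Rpower (INR 1) (rho - 1) by apply: exp_pos.
  nra.
have [n hn] := INR_archimed 1 (exp (ln C / (1 - rho))) Rlt_0_1.
have := H n.+1 isT; rewrite /Rpower.
have hk : exp (ln C / (1 - rho)) < INR n.+1 by rewrite S_INR; lra.
have hl : ln C / (1 - rho) < ln (INR n.+1).
  rewrite -[ln C / _]ln_exp; apply: ln_increasing => //; exact: exp_pos.
have : (rho - 1) * ln (INR n.+1) < - ln C.
  have : ln C < (1 - rho) * ln (INR n.+1).
    have -> : ln C = (1 - rho) * (ln C / (1 - rho)) by field; lra.
    apply: Rmult_lt_compat_l; lra.
  lra.
move=> h1 h2.
have : exp ((rho - 1) * ln (INR n.+1)) < exp (- ln C) by apply: exp_increasing.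
rewrite exp_Ropp exp_ln // => h3.
have : C * exp ((rho - 1) * ln (INR n.+1)) < C * / C by apply: Rmult_lt_compat_l.
rewrite Rinv_r; lra.
Qed.

Section Alpha.
Variable alpha : nat -> R.
Variable rho : R.
Hypothesis Ha0 : forall k, 0 <= alpha k.
Hypothesis Hrho : 1 <= rho.
Let u := fun k : nat => alpha k.+1 * Rpower (INR k.+1) (rho - 1).

Lemma u_ge_alpha k : alpha k.+1 <= u k.
Proof.
rewrite /u; have := Ha0 k.+1; have : 1 <= Rpower (INR k.+1) (rho - 1).
  apply: Rpower_ge1; last lra.
  rewrite S_INR; have := pos_INR k; lra.
nra.
Qed.

Lemma u_ge0 k : 0 <= u k.
Proof. have := u_ge_alpha k; have := Ha0 k.+1; lra. Qed.

Variable l : R.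
Hypothesis Hcv : Un_cv (fun n => sum_f_R0 u n) l.

Lemma partial_le n : sum_f_R0 u n <= l.
Proof.
apply: growing_ineq Hcv n => m /=; have := u_ge0 m.+1; lra.
Qed.

Lemma alpha_small eps : 0 < eps -> exists K0 : nat, (2 <= K0)%N /\ alpha K0 <= eps.
Proof.
move=> he; have [N HN] := Hcv (eps / 2) ltac:(lra).
exists N.+2; split; first by [].
have h1 := HN N (le_n N); have h2 := HN N.+1 (le_S _ _ (le_n N)).
move: h1 h2; rewrite /Rdist /= => h1 h2.
have := u_ge_alpha N.+1.
move: h1 h2; set a := sum_f_R0 u N; set b := u N.+1.
move=> /Rabs_def2 [h1 h1'] /Rabs_def2 [h2 h2']; lra.
Qed.

End Alpha.

Lemma big_sum_f (u : nat -> R) n : \big[Rplus/0]_(0 <= d < n.+1) u d = sum_f_R0 u n.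
Proof.
elim: n => [|n IH]; first by rewrite big_nat1.
by rewrite big_nat_recr //= IH.
Qed.


Lemma sum_le_in (X : eqType) (r : seq X) (F G : X -> R) :
  (forall i, i \in r -> F i <= G i) ->
  \big[Rplus/0]_(i <- r) F i <= \big[Rplus/0]_(i <- r) G i.
Proof.
elim: r => [|x r IH] H; rewrite ?big_nil ?big_cons; first lra.
have h1 := H x (mem_head x r).
have h2 : \big[Rplus/0]_(i <- r) F i <= \big[Rplus/0]_(i <- r) G i.
  by apply: IH => i hi; apply: H; rewrite in_cons hi orbT.
lra.
Qed.

Lemma var_bound (Om : finType) (P : Om -> R) (HP : is_prob P) (X : eqType) (r : seq X)
  (J : finType) (Z : X -> Om -> R) (a : J -> R) (E : X -> J -> pred Om) (A : R)
  (bnd : X -> X -> R) (c0 : R) (Y : Om -> R) :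
  (forall w, Y w = c0 * \big[Rplus/0]_(x <- r) Z x w) ->
  (forall x, x \in r -> forall w, 0 < P w ->
       Z x w = \big[Rplus/0]_(j : J) (a j * indb (E x j w))) ->
  (forall j, Rabs (a j) <= A) ->
  (forall x y, x \in r -> y \in r -> forall j k,
      Rabs (Prob P (predI (E x j) (E y k)) - Prob P (E x j) * Prob P (E y k)) <= bnd x y) ->
  Esp P (fun w => (Y w - Esp P Y) ^ 2) <=
  c0 ^ 2 * \big[Rplus/0]_(x <- r) \big[Rplus/0]_(y <- r)
     (INR (size (index_enum J)) ^ 2 * A ^ 2 * bnd x y).
Proof.
move=> HY Hrep HA Hmix.
have eY : Esp P Y = Esp P (fun w => c0 * \big[Rplus/0]_(x <- r) Z x w).
  apply: (@Esp_ext _ _ HP) => w _; apply: HY.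
rewrite eY (@Esp_ext _ _ HP _ (fun w => (c0 * \big[Rplus/0]_(x <- r) Z x w
      - Esp P (fun w => c0 * \big[Rplus/0]_(x <- r) Z x w)) ^ 2)); last first.
  by move=> w _; rewrite HY.
rewrite (@var_expand _ _ HP).
apply: Rmult_le_compat_l; first exact: pow2_ge_0.
apply: sum_le_in => x hx; apply: sum_le_in => y hy.
rewrite (@cov_repr _ _ HP _ _ _ _ _ _ _ (Hrep x hx) (Hrep y hy)).
have -> : INR (size (index_enum J)) ^ 2 * A ^ 2 * bnd x y =
   \big[Rplus/0]_(j : J) \big[Rplus/0]_(k : J) (A * A * bnd x y).
  rewrite sum_const sum_const count_predT; ring.
apply: sum_le => j _; apply: sum_le => k _.
apply: Rle_trans (Rle_abs _) _.
rewrite !Rabs_mult.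
have := HA j; have := HA k; have := Hmix x y hx hy j k.
have := Rabs_pos (a j); have := Rabs_pos (a k).
move: (Rabs (a j)) (Rabs (a k)) => u v.
set D := Rabs _ => h1 h2 h3 h4 h5.
have h6 : 0 <= D by apply: Rabs_pos.
apply: Rmult_le_compat; try nra.
Qed.

Lemma sum_pick (e K : nat) (F : nat -> R) :
  \big[Rplus/0]_(0 <= d < K) (if e == d then F d else 0) = if (e < K)%N then F e else 0.
Proof.
elim: K => [|K IH]; first by rewrite big_nil.
rewrite big_nat_recr //= IH.
case: (ltngtP e K) => h.
- have -> : (e < K.+1)%N by lia.
  ring.
- have -> : (e < K.+1)%N = false by lia.
  ring.
- rewrite h ltnSn; ring.
Qed.

Lemma count_bound (X : eqType) (r : seq X) (kd : X -> nat) (K0 : nat)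
  (alpha : nat -> R) (bnd : nat -> R) :
  (forall y, (kd y <= K0)%N) -> (forall k, 0 <= alpha k) ->
  (forall d, (d < K0)%N -> INR (count (fun y => kd y == d) r) <= bnd d) ->
  \big[Rplus/0]_(y <- r) alpha (kd y) <=
  INR (size r) * alpha K0 + \big[Rplus/0]_(0 <= d < K0) (alpha d * bnd d).
Proof.
move=> Hk Ha Hc.
apply: Rle_trans (@sum_le _ r xpredT _
   (fun y => alpha K0 + \big[Rplus/0]_(0 <= d < K0) (if kd y == d then alpha d else 0)) _) _.
  move=> y _; rewrite sum_pick.
  have := Hk y; rewrite leq_eqVlt; case/orP => [/eqP ->|->]; last by have := Ha K0; lra.
  by rewrite ltnn; lra.
rewrite sum_addP sum_const count_predT.
apply: Rplus_le_compat_l.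
rewrite sum_exch; apply: sum_le_in => d; rewrite mem_index_iota => /andP [_ hd].
rewrite (@sum_ind_const _ r (fun y => kd y == d) (alpha d)).
have := Hc d hd; have := Ha d; nra.
Qed.

Lemma bnd_sum (alpha : nat -> R) rho C l K0 :
  (2 <= K0)%N -> 0 <= C -> (forall k, 0 <= alpha k) -> 1 <= rho ->
  Un_cv (fun n => sum_f_R0 (fun k => alpha k.+1 * Rpower (INR k.+1) (rho - 1)) n) l ->
  \big[Rplus/0]_(0 <= d < K0)
     (alpha d * (if d == 0%N then C else C * Rpower (INR d) (rho - 1)))
  <= alpha 0%N * C + C * l.
Proof.
case: K0 => [|[|n]] // _ hC Ha Hr Hcv.
rewrite big_ltn // big_add1 /=.
apply: Rplus_le_compat_l.
have -> : \big[Rplus/0]_(0 <= i < n.+1)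
    (alpha i.+1 * (C * Rpower (INR i.+1) (rho - 1))) =
  C * \big[Rplus/0]_(0 <= i < n.+1) (alpha i.+1 * Rpower (INR i.+1) (rho - 1)).
  rewrite sum_mulrP; apply: eq_bigr => i _; ring.
rewrite big_sum_f.
apply: Rmult_le_compat_l => //.
exact: (@partial_le alpha rho Ha Hr l Hcv n).
Qed.


Section KD.
Variables (N T : nat) (Om : finType) (P : Om -> R) (G : Om -> nat -> rel 'I_N) (K0 : nat).

Definition dgb (x y : 'I_N * nat) (k : nat) : bool :=
  if excluded_middle_informative (dist_ge T P G x y k) then true else false.

Definition kd (x y : 'I_N * nat) : nat := find (fun d => ~~ dgb x y d.+1) (iota 0 K0).

Lemma kd_le x y : (kd x y <= K0)%N.
Proof. by rewrite /kd -[X in (_ <= X)%N](size_iota 0 K0) find_size. Qed.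

Lemma dgbP x y k : dgb x y k -> dist_ge T P G x y k.
Proof. by rewrite /dgb; case: excluded_middle_informative. Qed.

Lemma dgbN x y k : ~~ dgb x y k -> ~ dist_ge T P G x y k.
Proof. by rewrite /dgb; case: excluded_middle_informative. Qed.

Lemma kd_ge x y : dist_ge T P G x y (kd x y).
Proof.
case e: (kd x y) => [|d].
  by move=> w _ u v l _ _.
have hd : (d < kd x y)%N by rewrite e.
have := before_find 0%N hd.
have hK : (d < K0)%N by have := kd_le x y; rewrite e; lia.
rewrite nth_iota // add0n => /negbFE; exact: dgbP.
Qed.

Lemma kd_eq x y : (kd x y < K0)%N -> dist_eq T P G x y (kd x y).
Proof.
move=> h; split; first exact: kd_ge.
have hs : has (fun d => ~~ dgb x y d.+1) (iota 0 K0) by rewrite has_find size_iota.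
have := nth_find 0%N hs; rewrite -/(kd x y) nth_iota // add0n.
exact: dgbN.
Qed.

End KD.

Section Codes.
Variables (S : finType) (n : nat).

Definition cc (c : {ffun S -> 'I_n.+1 * 'I_n.+1}) : cube S :=
  [ffun s' => (nat_of_ord (c s').1, nat_of_ord (c s').2)].

Lemma cc_inj : injective cc.
Proof.
move=> c c' e; apply/ffunP => s'.
have := congr1 (fun h : cube S => h s') e; rewrite /cc !ffunE.
case: (c s') => a b; case: (c' s') => a' b' /= [] e1 e2.
by congr (_, _); apply: val_inj.
Qed.

Lemma cube_code (h : cube S) :
  (forall s', ((h s').1 <= n)%N /\ ((h s').2 <= n)%N) ->
  cc [ffun s' => (inord (h s').1, inord (h s').2)] = h.
Proof.
move=> H; apply/ffunP => s'; rewrite /cc !ffunE /=.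
have [h1 h2] := H s'.
rewrite !inordK ?ltnS //; by case: (h s').
Qed.

End Codes.
Arguments cc {S n}.
Arguments cube_code {S n}.
Arguments cc_inj {S n}.

Lemma sum_pick_seq (J : eqType) (r : seq J) (a : J -> R) (j0 : J) :
  uniq r -> \big[Rplus/0]_(j <- r) (a j * indb (j == j0)) = if j0 \in r then a j0 else 0.
Proof.
elim: r => [|x r IH] /=; first by rewrite big_nil.
case/andP => hx hu; rewrite big_cons IH // in_cons.
case: (eqVneq x j0) => [<-|ne] /=.
  by rewrite (negbTE hx) /indb; ring.
ring.
Qed.

Lemma sum_pick1 (J : finType) (a : J -> R) (j0 : J) :
  \big[Rplus/0]_(j : J) (a j * indb (j == j0)) = a j0.
Proof.
by rewrite sum_pick_seq ?index_enum_uniq // mem_index_enum.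
Qed.

Section Concrete.
Variables (S : finType) (N : nat) (Om : finType) (GG : Om -> nat -> rel 'I_N)
  (ff : Om -> nat -> 'I_N -> 'I_N -> S) (D : cube S -> cube S -> R) (b : R)
  (hq : cube S) (n : nat) (cnt : Om -> 'I_N -> nat -> nat) (A : R).

Definition Jt := ({ffun S -> 'I_n.+1 * 'I_n.+1} * 'I_n.+1)%type.

Definition Zc (x : 'I_N * nat) (w : Om) : R :=
  Kb D b (datacube (GG w) (ff w) x.1 x.2) hq * INR (cnt w x.1 x.2.+1).

Definition Ec (x : 'I_N * nat) (j : Jt) : pred Om := fun w =>
  (datacube (GG w) (ff w) x.1 x.2 == cc j.1) && (cnt w x.1 x.2.+1 == j.2).

Definition ac (j : Jt) : R := Rmax 0 (Rmin (Rpower b (D (cc j.1) hq) * INR j.2) A).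

Lemma ac_bound j : 0 <= A -> Rabs (ac j) <= A.
Proof.
move=> hA; rewrite /ac Rabs_pos_eq; last exact: Rmax_l.
apply: Rmax_lub => //; exact: Rmin_r.
Qed.

Lemma Zc_repr x w :
  (forall s', ((datacube (GG w) (ff w) x.1 x.2 s').1 <= n)%N /\
              ((datacube (GG w) (ff w) x.1 x.2 s').2 <= n)%N) ->
  (cnt w x.1 x.2.+1 <= n)%N ->
  0 <= Zc x w <= A ->
  Zc x w = \big[Rplus/0]_(j : Jt) (ac j * indb (Ec x j w)).
Proof.
move=> Hd Hc HZ.
set h := datacube (GG w) (ff w) x.1 x.2.
pose j0 : Jt := ([ffun s' => (inord (h s').1, inord (h s').2)], inord (cnt w x.1 x.2.+1)).
have e1 : cc j0.1 = h by apply: cube_code.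
have e2 : nat_of_ord j0.2 = cnt w x.1 x.2.+1 by rewrite /= inordK // ltnS.
have HE : forall j, Ec x j w = (j == j0).
  move=> [j1 j2]; rewrite /Ec -/h -e1 -e2 (inj_eq cc_inj) /=.
  by rewrite xpair_eqE (eq_sym j0.1) (eq_sym (val j0.2)).
under eq_bigr => j _ do rewrite HE.
rewrite sum_pick1 /ac e1 e2.
rewrite /Zc -/h /Kb in HZ *.
rewrite Rmin_left; last lra.
rewrite Rmax_right; lra.
Qed.

Variable pr : nat * nat -> nat.
Variable s : S.
Hypothesis Hcnt : forall w i t, cnt w i t.+1 = pr (datacube (GG w) (ff w) i t.+2 s).

Lemma Ec_meas x j : Fmeas GG ff x (Ec x j).
Proof.
move=> w w' [e1 e2]; rewrite /Ec !Hcnt e1 e2 //.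
Qed.

End Concrete.

Lemma n_cnt_le (S : finType) N (G : nat -> rel 'I_N) (f : nat -> 'I_N -> 'I_N -> S) i t s M :
  (#|nbhd (G t) i| <= M)%N -> (n_cnt G f i t s <= M * M)%N.
Proof.
move=> H; rewrite /n_cnt.
apply: leq_trans (subset_leq_card (B := setX (nbhd (G t) i) (nbhd (G t) i)) _) _.
  by apply/subsetP => jk; rewrite inE => /and4P [h1 h2 _ _]; case: jk h1 h2 => j k h1 h2; rewrite in_setX h1 h2.
by rewrite cardsX leq_mul.
Qed.

Lemma nplus_le (S : finType) N (G : nat -> rel 'I_N) (f : nat -> 'I_N -> 'I_N -> S) i t s M :
  (#|nbhd (G t) i| <= M)%N -> (nplus G f i t s <= M * M)%N.
Proof.
move=> H; rewrite /nplus.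
apply: leq_trans (subset_leq_card (B := setX (nbhd (G t) i) (nbhd (G t) i)) _) _.
  by apply/subsetP => jk; rewrite inE => /and5P [h1 h2 _ _ _]; case: jk h1 h2 => j k h1 h2; rewrite in_setX h1 h2.
by rewrite cardsX leq_mul.
Qed.


Lemma div_ge0 a b : 0 <= a -> 0 < b -> 0 <= a / b.
Proof. move=> ha hb; apply: Rmult_le_pos => //; apply: Rlt_le; exact: Rinv_0_lt_compat. Qed.

Lemma le_div_r a b c : 0 < c -> a * c <= b -> a <= b / c.
Proof.
move=> hc h; have -> : a = (a * c) / c by field; lra.
apply: Rmult_le_compat_r => //; apply: Rlt_le; exact: Rinv_0_lt_compat.
Qed.

Lemma abs_div_le x d e : 0 < d -> Rabs x <= e * d -> Rabs (x / d) <= e.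
Proof.
move=> hd h; rewrite /Rdiv Rabs_mult Rabs_inv (Rabs_pos_eq d); last lra.
have -> : e = e * d * / d by field; lra.
apply: Rmult_le_compat_r => //; apply: Rlt_le; exact: Rinv_0_lt_compat.
Qed.

Lemma indb_le1 b : indb b <= 1.
Proof. rewrite /indb; case: b; lra. Qed.

Lemma det_bound (fh hh Ef Eh g c eps eta A : R) :
  0 < c -> c <= Ef -> 0 <= Eh <= 2 * A -> 0 < eta -> eta <= c / 2 ->
  eta * (2 * c + 4 * A) <= eps * (c * c) ->
  indb (~~ Rltb 0 fh || Rltb eps (Rabs (hh / fh - g - (Eh - g * Ef) / Ef)))
   <= ((fh - Ef) ^ 2 + (hh - Eh) ^ 2) / eta ^ 2.
Proof.
move=> hc hEf hEh heta heta2 hkey.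
have he2 : 0 < eta ^ 2 by apply: pow_lt.
have hR : 0 <= ((fh - Ef) ^ 2 + (hh - Eh) ^ 2) / eta ^ 2.
  apply: div_ge0 => //; have := pow2_ge_0 (fh - Ef); have := pow2_ge_0 (hh - Eh); lra.
case: (Rlt_le_dec (Rabs (fh - Ef)) eta) => h1; last first.
  apply: Rle_trans (indb_le1 _) _.
  have : eta ^ 2 <= (fh - Ef) ^ 2.
    rewrite -(pow2_abs (fh - Ef)); apply: pow_incr; lra.
  move=> h; apply: le_div_r => //; rewrite Rmult_1_l.
  have := pow2_ge_0 (hh - Eh); lra.
case: (Rlt_le_dec (Rabs (hh - Eh)) eta) => h2; last first.
  apply: Rle_trans (indb_le1 _) _.
  have : eta ^ 2 <= (hh - Eh) ^ 2.
    rewrite -(pow2_abs (hh - Eh)); apply: pow_incr; lra.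
  move=> h; apply: le_div_r => //; rewrite Rmult_1_l.
  have := pow2_ge_0 (fh - Ef); lra.
move: h1 h2 => /Rabs_def2 [h1 h1'] /Rabs_def2 [h2 h2'].
have hfh : c / 2 < fh by lra.
have hEf0 : 0 < Ef by lra.
have hfh0 : 0 < fh by lra.
have -> : Rltb 0 fh = true by rewrite /Rltb; case: Rlt_dec.
have -> : Rltb eps (Rabs (hh / fh - g - (Eh - g * Ef) / Ef)) = false.
  rewrite /Rltb; case: Rlt_dec => // hlt; exfalso; move: hlt.
  have -> : hh / fh - g - (Eh - g * Ef) / Ef =
     ((hh - Eh) * Ef - Eh * (fh - Ef)) / (fh * Ef) by field; lra.
  apply: Rle_not_lt; apply: abs_div_le; first by apply: Rmult_lt_0_compat.
  have hn : Rabs ((hh - Eh) * Ef - Eh * (fh - Ef)) <= eta * Ef + 2 * A * eta.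
    apply: Rle_trans (Rabs_triang _ _) _; rewrite Rabs_Ropp !Rabs_mult.
    rewrite (Rabs_pos_eq Ef); last lra.
    rewrite (Rabs_pos_eq Eh); last lra.
    have h3 : Rabs (hh - Eh) <= eta by apply: Rabs_le; lra.
    have h4 : Rabs (fh - Ef) <= eta by apply: Rabs_le; lra.
    have := Rabs_pos (hh - Eh); have := Rabs_pos (fh - Ef).
    nra.
  have hk2 : eta * Ef + 2 * A * eta * Ef / c <= eps * c * Ef / 2.
    have -> : eta * Ef + 2 * A * eta * Ef / c = (eta * (2 * c + 4 * A)) * (Ef / (2 * c))
      by field; lra.
    have -> : eps * c * Ef / 2 = (eps * (c * c)) * (Ef / (2 * c)) by field; lra.
    apply: Rmult_le_compat_r => //; apply: Rlt_le; apply: Rdiv_lt_0_compat; lra.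
  have hA : 0 <= A by lra.
  have hk3 : 2 * A * eta <= 2 * A * eta * Ef / c.
    have -> : 2 * A * eta * Ef / c = (2 * A * eta) * (Ef / c) by field; lra.
    have : 1 <= Ef / c by apply: le_div_r => //; lra.
    have : 0 <= 2 * A * eta by nra.
    nra.
  have hk4 : eps * c * Ef / 2 <= eps * (fh * Ef).
    have heps : 0 <= eps.
      have : 0 <= eps * (c * c) by have := Rmult_le_pos _ _ (Rlt_le _ _ heta) (ltac:(lra) : 0 <= 2 * c + 4 * A); lra.
      move=> h; apply: Rnot_lt_le => hn'; have : eps * (c * c) < 0 by apply: Rmult_neg_pos => //; nra.
      lra.
    have : c / 2 * Ef <= fh * Ef by apply: Rmult_le_compat_r; lra.
    nra.
  lra.
by rewrite /indb.
Qed.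

Lemma c0_bounds N T p : (1 <= N)%N -> (p + 3 <= T)%N ->
  0 < / (INR N * (INR T - INR p - 2)) /\
  / (INR N * (INR T - INR p - 2)) * INR ((T.-1 - p) * N) <= 2 /\
  / (INR N * (INR T - INR p - 2)) <= INR (p + 3) / (INR N * INR T).
Proof.
move=> hN hT.
have [a ea] : exists a, T = (a + p + 3)%N by exists (T - (p + 3))%N; lia.
have e2 : ((T.-1 - p) * N)%N = ((a + 2) * N)%N by rewrite ea; lia.
rewrite e2 ea !mult_INR !plus_INR.
have hN' : 1 <= INR N by apply: (le_INR 1); apply/leP.
have ha := pos_INR a; have hp := pos_INR p.
have -> : INR 3 = 3 by rewrite /=; ring.
have -> : INR 2 = 2 by rewrite /=; ring.
have hd : 0 < INR N * (INR a + INR p + 3 - INR p - 2) by nra.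
split; first exact: Rinv_0_lt_compat.
split.
  have -> : / (INR N * (INR a + INR p + 3 - INR p - 2)) * ((INR a + 2) * INR N)
     = (INR a + 2) / (INR a + 1) by field; lra.
  apply: Rmult_le_reg_r (_ : 0 < INR a + 1) _; first lra.
  rewrite /Rdiv Rmult_assoc Rinv_l; lra.
have hd2 : 0 < INR N * (INR a + INR p + 3) by nra.
apply: le_div_r => //.
have -> : / (INR N * (INR a + INR p + 3 - INR p - 2)) * (INR N * (INR a + INR p + 3))
   = (INR a + INR p + 3) / (INR a + 1) by field; lra.
apply: Rmult_le_reg_r (_ : 0 < INR a + 1) _; first lra.
rewrite /Rdiv Rmult_assoc Rinv_l; nra.
Qed.

Lemma div_le_r a b c : 0 < c -> a <= b * c -> a / c <= b.
Proof.
move=> hc h; have -> : b = (b * c) / c by field; lra.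
apply: Rmult_le_compat_r => //; apply: Rlt_le; exact: Rinv_0_lt_compat.
Qed.


Theorem theorem3
  (S : finType) (p : nat) (hp : (1 <= p)%N)
  (Om : nat -> nat -> finType)
  (P : forall N T : nat, Om N T -> R)
  (G : forall N T : nat, Om N T -> nat -> rel 'I_N)
  (f : forall N T : nat, Om N T -> nat -> 'I_N -> 'I_N -> S)
  (g : S -> cube S -> R)
  (D : cube S -> cube S -> R)
  (b : nat -> nat -> R)
  (rho : R)
  (s : S) (hq : cube S)
  (* probability laws *)
  (HP : forall N T, is_prob (P N T))
  (* g takes values in [0,1] *)
  (Hg : forall s' h, 0 <= g s' h <= 1)
  (* D(h,h') is the sum of TV distances between the Gaussians, on possible datacubes,
     and D(h,h') = 0 iff h = h' there *)
  (Hposs_D : forall h h',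
      (exists N T (w : Om N T) (x : 'I_N * nat),
          valid T x /\ 0 < P N T w /\ datacube (G N T w) (f N T w) x.1 x.2 = h) ->
      (exists N T (w : Om N T) (x : 'I_N * nat),
          valid T x /\ 0 < P N T w /\ datacube (G N T w) (f N T w) x.1 x.2 = h') ->
      D_is h h' (D h h') /\ (D h h' = 0 <-> h = h'))
  (* h_q is a possible datacube *)
  (Hhq : exists N T (w : Om N T) (x : 'I_N * nat),
          valid T x /\ 0 < P N T w /\ datacube (G N T w) (f N T w) x.1 x.2 = hq)
  (* model (M) *)
  (HM : forall N T (i : 'I_N) t, valid T (i, t) -> forall s' (h : cube S) (m : nat),
      \big[Rplus/0]_(w : Om N T | (datacube (G N T w) (f N T w) i t == h)
                                && (n_cnt (G N T w) (f N T w) i t.+1 s' == m))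
          (P N T w * INR (nplus (G N T w) (f N T w) i t.+1 s'))
      = INR m * g s' h *
        Prob (P N T) (fun w => (datacube (G N T w) (f N T w) i t == h)
                             && (n_cnt (G N T w) (f N T w) i t.+1 s' == m)))
  (* (A1) *)
  (HA1 : exists M : nat, forall N T (w : Om N T), 0 < P N T w ->
      forall (i : 'I_N) t, (t <= T)%N -> (#|nbhd (G N T w t) i| <= M)%N)
  (* (A2) *)
  (Hb01 : forall N T, 0 < b N T < 1)
  (HA2 : forall eps, 0 < eps -> exists M : nat, forall N T, (M <= N * T)%N -> b N T < eps)
  (* (A3) strong mixing *)
  (HA3 : exists alpha : nat -> R,
      (forall N T (x y : 'I_N * nat) (k : nat), valid T x -> valid T y ->
         dist_ge T (P N T) (G N T) x y k ->
         forall A B : pred (Om N T),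
           Fmeas (G N T) (f N T) x A -> Fmeas (G N T) (f N T) y B ->
           Rabs (Prob (P N T) (predI A B) - Prob (P N T) A * Prob (P N T) B) <= alpha k) /\
      (exists l, Un_cv (fun n => sum_f_R0
                   (fun k => alpha k.+1 * Rpower (INR k.+1) (rho - 1)) n) l))
  (* (A4) growth *)
  (HA4 : exists C : R, forall N T (x : 'I_N * nat), valid T x ->
      forall (d : nat) (X : seq ('I_N * nat)), uniq X ->
        (forall y, y \in X -> valid T y /\ dist_eq T (P N T) (G N T) x y d) ->
        INR (size X) <= (if d == 0%N then C else C * Rpower (INR d) (rho - 1)))
  (* liminf E[fhat] > 0 *)
  (Hliminf : exists c, 0 < c /\ exists M : nat, forall N T,
      (M <= N * T)%N -> (p + 3 <= T)%N ->
      c <= Esp (P N T) (fun w => fhat T p (G N T w) (f N T w) D (b N T) s hq)) :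
  (* conclusion: ghat - g - B -> 0 in probability *)
  forall eps delta, 0 < eps -> 0 < delta ->
  exists M : nat, forall N T, (M <= N * T)%N -> (p + 3 <= T)%N ->
    let Eh := Esp (P N T) (fun w => hhat T p (G N T w) (f N T w) D (b N T) s hq) in
    let Ef := Esp (P N T) (fun w => fhat T p (G N T w) (f N T w) D (b N T) s hq) in
    let B := (Eh - g s hq * Ef) / Ef in
    Prob (P N T) (fun w =>
      let fh := fhat T p (G N T w) (f N T w) D (b N T) s hq in
      let hh := hhat T p (G N T w) (f N T w) D (b N T) s hq in
      ~~ Rltb 0 fh || Rltb eps (Rabs (hh / fh - g s hq - B))) <= delta.
Proof.
move=> eps delta heps hdelta.
have [M1 HM1] := HA1.
have [alpha [Hmix [l Hcv]]] := HA3.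
have [C HC] := HA4.
have [c [hc [Mf HMf]]] := Hliminf.
set n := (M1 * M1)%N.
set A := INR n.
have hA : 0 <= A by apply: pos_INR.
have Ha0 : forall k, 0 <= alpha k.
  move=> k.
  have vx : valid (k + 4) (@ord0 0, 1%N) by rewrite /valid /=; split; lia.
  have vy : valid (k + 4) (@ord0 0, (k + 2)%N) by rewrite /valid /=; split; lia.
  have := Hmix 1%N (k + 4)%N _ _ k vx vy (far_pair _ _ _ _ _ _ _) predT predT
     (fun w w' _ => erefl) (fun w w' _ => erefl).
  move=> h; apply: Rle_trans h; exact: Rabs_pos.
have Hrho : 1 <= rho.
  apply: (rho_ge1 C rho) => k hk.
  have vx : valid (k + 4) (@ord0 0, 1%N) by rewrite /valid /=; split; lia.
  have vy : valid (k + 4) (@ord0 0, (k + 2)%N) by rewrite /valid /=; split; lia.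
  have := HC 1%N (k + 4)%N _ vx k [:: (@ord0 0, (k + 2)%N)] isT.
  have -> : (k == 0%N) = false by lia.
  rewrite /=; apply.
  move=> y; rewrite inE => /eqP ->; split => //; split.
    exact: far_pair.
  by apply: near_pair => //; lia.
have HC0 : 0 <= C.
  have vx : valid 3 (@ord0 0, 1%N) by rewrite /valid /=; split; lia.
  by have := HC 1%N 3%N _ vx 0%N [::] isT; rewrite /=; apply.
have hl0 : 0 <= l.
  apply: Rle_trans _ (@partial_le alpha rho Ha0 Hrho l Hcv 0%N).
  rewrite /=; apply: Rmult_le_pos => //; apply: Rlt_le; exact: exp_pos.
set J := Jt S n.
set L := INR (size (index_enum J)) ^ 2 * A ^ 2.
have hL : 0 <= L by apply: Rmult_le_pos; apply: pow2_ge_0.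
set Q := alpha 0%N * C + C * l.
have hQ : 0 <= Q by rewrite /Q; apply: Rplus_le_le_0_compat; apply: Rmult_le_pos.
set eta := Rmin (c / 2) (eps * (c * c) / (2 * c + 4 * A)).
have heta : 0 < eta.
  apply: Rmin_glb_lt; first lra.
  apply: Rdiv_lt_0_compat; last lra.
  apply: Rmult_lt_0_compat => //; exact: Rmult_lt_0_compat.
have heta2 : eta <= c / 2 by apply: Rmin_l.
have hkey : eta * (2 * c + 4 * A) <= eps * (c * c).
  have h := Rmin_r (c / 2) (eps * (c * c) / (2 * c + 4 * A)); rewrite -/eta in h.
  have -> : eps * (c * c) = eps * (c * c) / (2 * c + 4 * A) * (2 * c + 4 * A) by field; lra.
  apply: Rmult_le_compat_r => //; lra.
set V := delta * eta ^ 2 / 2.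
have hV : 0 < V by rewrite /V; apply: Rdiv_lt_0_compat; [apply: Rmult_lt_0_compat => //; exact: pow_lt|lra].
have [K0 [hK0 haK]] := @alpha_small alpha rho Ha0 Hrho l Hcv (V / (8 * L + 1))
   ltac:(apply: Rdiv_lt_0_compat; lra).
have haK' : 4 * L * alpha K0 <= V / 2.
  have h1 : 4 * L * alpha K0 <= 4 * L * (V / (8 * L + 1)).
    by apply: Rmult_le_compat_l => //; lra.
  apply: Rle_trans h1 _.
  have -> : 4 * L * (V / (8 * L + 1)) = V / 2 * (8 * L / (8 * L + 1)) by field; lra.
  have : 8 * L / (8 * L + 1) <= 1 by apply: div_le_r; lra.
  have : 0 <= 8 * L / (8 * L + 1) by apply: div_ge0; lra.
  nra.
have [Mb hMb] := INR_archimed 1 (4 * L * Q * INR (p + 3) / V) Rlt_0_1.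
rewrite Rmult_1_r in hMb.
exists (maxn (maxn Mf Mb) 1).
move=> N T hNT hT.
have hN : (1 <= N)%N.
  have : (1 <= N * T)%N by lia.
  by case: N {hNT} => // N' _; rewrite ltnS leq0n.
have hMfNT : (Mf <= N * T)%N by lia.
have hMbNT : (Mb <= N * T)%N by lia.
set c0 := / (INR N * (INR T - INR p - 2)).
set X0 := [seq (i, t) | t <- index_iota p T.-1, i <- index_enum 'I_N].
have hX0v : forall x, x \in X0 -> valid T x.
  move=> x /allpairsP [[t i] [/= ht _ ->]].
  move: ht; rewrite mem_index_iota => /andP [h1 h2].
  rewrite /valid /=; split; lia.
have hX0u : uniq X0.
  apply: allpairs_uniq; [exact: iota_uniq | exact: index_enum_uniq |].
  by move=> [t i] [t' i'] _ _ /= [-> ->].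
have hX0s : size X0 = ((T.-1 - p) * N)%N.
  rewrite size_allpairs size_iota.
  have := deprecated_filter_index_enum (T := 'I_N) predT.
  by rewrite filter_predT => ->; rewrite size_enum_ord.
have [hc0 [hc0m hc0T]] := c0_bounds N T p hN hT.
rewrite -/c0 in hc0 hc0m hc0T.
pose Yc (cnt : Om N T -> 'I_N -> nat -> nat) (w : Om N T) :=
  c0 * \big[Rplus/0]_(x <- X0) Zc S N (Om N T) (G N T) (f N T) D (b N T) hq cnt x w.
have hposs : forall w x, 0 < P N T w -> valid T x -> 0 <= D (datacube (G N T w) (f N T w) x.1 x.2) hq.
  move=> w x Pw vx.
  have [hD _] := Hposs_D (datacube (G N T w) (f N T w) x.1 x.2) hq
     (ex_intro _ N (ex_intro _ T (ex_intro _ w (ex_intro _ x (conj vx (conj Pw erefl)))))) Hhq.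
  exact: D_nonneg hD.
have F0 : forall cnt : Om N T -> 'I_N -> nat -> nat,
    (forall w, 0 < P N T w -> forall i t, (t <= T)%N -> (cnt w i t <= n)%N) ->
    forall x w, valid T x -> 0 < P N T w ->
      0 <= Zc S N (Om N T) (G N T) (f N T) D (b N T) hq cnt x w <= A.
  move=> cnt Hcnt x w vx Pw.
  rewrite /Zc /Kb.
  have [k0 k1] := Rpower_in01 _ _ (Hb01 N T) (hposs w x Pw vx).
  have hcA : INR (cnt w x.1 x.2.+1) <= A.
    apply: le_INR; apply/leP; apply: Hcnt => //; case: vx; lia.
  have := pos_INR (cnt w x.1 x.2.+1).
  split; nra.
have F2 : forall (cnt : Om N T -> 'I_N -> nat -> nat) (pr : nat * nat -> nat),
    (forall w i t, cnt w i t.+1 = pr (datacube (G N T w) (f N T w) i t.+2 s)) ->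
    (forall w, 0 < P N T w -> forall i t, (t <= T)%N -> (cnt w i t <= n)%N) ->
    Esp (P N T) (fun w => (Yc cnt w - Esp (P N T) (Yc cnt)) ^ 2) <= V.
  move=> cnt pr Hpr Hcnt.
  set kdx := kd N T (Om N T) (P N T) (G N T) K0.
  apply: Rle_trans (@var_bound _ _ (HP N T) _ X0 J
     (Zc S N (Om N T) (G N T) (f N T) D (b N T) hq cnt)
     (ac S D (b N T) hq n A) (Ec S N (Om N T) (G N T) (f N T) n cnt) A
     (fun x y => alpha (kdx x y)) c0 (Yc cnt) _ _ _ _) _.
  - by move=> w.
  - move=> x hx w Pw; apply: Zc_repr.
    + move=> s'; rewrite /datacube ffunE /=; split; [apply: n_cnt_le | apply: nplus_le];
        apply: HM1 => //; case: (hX0v x hx); lia.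
    + apply: Hcnt => //; case: (hX0v x hx); lia.
    + exact: F0 (hX0v x hx) Pw.
  - move=> j; exact: ac_bound.
  - move=> x y hx hy j k; apply: (Hmix N T x y).
    + exact: hX0v.
    + exact: hX0v.
    + exact: kd_ge.
    + exact: (@Ec_meas S N (Om N T) (G N T) (f N T) n cnt pr s Hpr).
    + exact: (@Ec_meas S N (Om N T) (G N T) (f N T) n cnt pr s Hpr).
  rewrite -/L.
  have Hy : forall x, x \in X0 ->
      \big[Rplus/0]_(y <- X0) (L * alpha (kdx x y)) <=
      L * (INR (size X0) * alpha K0 + Q).
    move=> x hx; rewrite -sum_mulrP; apply: Rmult_le_compat_l => //.
    apply: Rle_trans (@count_bound _ X0 (kdx x) K0 alpha
       (fun d => if d == 0%N then C else C * Rpower (INR d) (rho - 1)) _ _ _) _.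
    + move=> y; exact: kd_le.
    + exact: Ha0.
    + move=> d hd; rewrite -size_filter; apply: (HC N T x (hX0v x hx)).
        exact: filter_uniq.
      move=> y; rewrite mem_filter => /andP [/eqP e hy]; split; first exact: hX0v.
      have hk : (kdx x y < K0)%N by rewrite e.
      by rewrite -e; apply: kd_eq.
    + apply: Rplus_le_compat_l; exact: bnd_sum.
  have H3 : \big[Rplus/0]_(x <- X0) \big[Rplus/0]_(y <- X0) (L * alpha (kdx x y)) <=
      INR (size X0) * (L * (INR (size X0) * alpha K0 + Q)).
    apply: Rle_trans (@sum_le_in _ X0 _ _ Hy) _.
    rewrite sum_const count_predT; exact: Rle_refl.
  apply: Rle_trans (Rmult_le_compat_l _ _ _ (pow2_ge_0 c0) H3) _.
  set m := INR (size X0).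
  have hm : 0 <= m by apply: pos_INR.
  have hcm : c0 * m <= 2 by rewrite /m hX0s.
  have ha0K := Ha0 K0.
  have e : c0 ^ 2 * (m * (L * (m * alpha K0 + Q))) =
     L * alpha K0 * ((c0 * m) * (c0 * m)) + L * Q * (c0 * m) * c0 by ring.
  rewrite e.
  have h1 : L * alpha K0 * ((c0 * m) * (c0 * m)) <= 4 * L * alpha K0.
    have hLa : 0 <= L * alpha K0 by apply: Rmult_le_pos.
    have : (c0 * m) * (c0 * m) <= 4.
      have : 0 <= c0 * m by apply: Rmult_le_pos => //; lra.
      nra.
    nra.
  have hNTe : INR N * INR T = INR (N * T) by rewrite mult_INR.
  have hNTpos : 0 < INR (N * T).
    have : (1 <= N * T)%N by lia.
    by move=> h; apply: lt_0_INR; apply/ltP.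
  have hMbNT' : INR Mb <= INR (N * T) by apply: le_INR; apply/leP.
  have h2 : L * Q * (c0 * m) * c0 <= V / 2.
    have hLQ : 0 <= L * Q by apply: Rmult_le_pos.
    have h21 : L * Q * (c0 * m) * c0 <= 2 * L * Q * c0.
      have -> : L * Q * (c0 * m) * c0 = (L * Q * c0) * (c0 * m) by ring.
      have -> : 2 * L * Q * c0 = (L * Q * c0) * 2 by ring.
      apply: Rmult_le_compat_l => //; apply: Rmult_le_pos => //; lra.
    apply: Rle_trans h21 _.
    have h22 : 2 * L * Q * c0 <= 2 * L * Q * (INR (p + 3) / INR (N * T)).
      rewrite -hNTe; have := hc0T; nra.
    apply: Rle_trans h22 _.
    have hp3 : 0 <= INR (p + 3) by apply: pos_INR.
    have hW : 4 * L * Q * INR (p + 3) <= V * INR (N * T).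
      have h3 : 4 * L * Q * INR (p + 3) < V * INR Mb.
        have -> : 4 * L * Q * INR (p + 3) = (4 * L * Q * INR (p + 3) / V) * V by field; lra.
        rewrite (Rmult_comm V); apply: Rmult_lt_compat_r => //.
      have : V * INR Mb <= V * INR (N * T) by apply: Rmult_le_compat_l; lra.
      lra.
    have -> : 2 * L * Q * (INR (p + 3) / INR (N * T)) =
       (4 * L * Q * INR (p + 3)) / INR (N * T) / 2 by field; lra.
    apply: Rmult_le_compat_r; first lra.
    apply: div_le_r => //; lra.
  lra.
pose cf : Om N T -> 'I_N -> nat -> nat := fun w i t => n_cnt (G N T w) (f N T w) i t s.
pose ch : Om N T -> 'I_N -> nat -> nat := fun w i t => nplus (G N T w) (f N T w) i t s.
have bf : forall w, 0 < P N T w -> forall i t, (t <= T)%N -> (cf w i t <= n)%N.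
  move=> w Pw i t ht; apply: n_cnt_le; exact: HM1.
have bh : forall w, 0 < P N T w -> forall i t, (t <= T)%N -> (ch w i t <= n)%N.
  move=> w Pw i t ht; apply: nplus_le; exact: HM1.
have pf : forall w i t, cf w i t.+1 = fst (datacube (G N T w) (f N T w) i t.+2 s).
  by move=> w i t; rewrite /datacube ffunE.
have ph : forall w i t, ch w i t.+1 = snd (datacube (G N T w) (f N T w) i t.+2 s).
  by move=> w i t; rewrite /datacube ffunE.
have eF : forall w, fhat T p (G N T w) (f N T w) D (b N T) s hq = Yc cf w.
  by move=> w; rewrite /Yc /X0 big_allpairs_dep.
have eH : forall w, hhat T p (G N T w) (f N T w) D (b N T) s hq = Yc ch w.
  by move=> w; rewrite /Yc /X0 big_allpairs_dep.
have Ybnd : forall cnt, (forall w, 0 < P N T w -> forall i t, (t <= T)%N -> (cnt w i t <= n)%N) ->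
    forall w, 0 < P N T w -> 0 <= Yc cnt w <= 2 * A.
  move=> cnt Hc w Pw; rewrite /Yc.
  have hs : 0 <= \big[Rplus/0]_(x <- X0) Zc S N (Om N T) (G N T) (f N T) D (b N T) hq cnt x w
            <= INR (size X0) * A.
    have h0 : \big[Rplus/0]_(x <- X0) (0:R) = 0 by rewrite (@sum_const _ X0 xpredT 0) Rmult_0_r.
    have hA' : \big[Rplus/0]_(x <- X0) A = INR (size X0) * A
      by rewrite (@sum_const _ X0 xpredT A) count_predT.
    split.
      apply: (Rle_trans _ (\big[Rplus/0]_(x <- X0) (0:R))); first by rewrite h0; lra.
      apply: sum_le_in => x hx; case: (F0 cnt Hc x w (hX0v x hx) Pw); lra.
    apply: (Rle_trans _ (\big[Rplus/0]_(x <- X0) A)); last by rewrite hA'; lra.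
    apply: sum_le_in => x hx; case: (F0 cnt Hc x w (hX0v x hx) Pw); lra.
  move: hs; rewrite hX0s => hs.
  split; first by apply: Rmult_le_pos; lra.
  have : c0 * (INR ((T.-1 - p) * N) * A) <= 2 * A.
    rewrite -Rmult_assoc; apply: Rmult_le_compat_r => //.
  have : c0 * \big[Rplus/0]_(x <- X0) Zc S N (Om N T) (G N T) (f N T) D (b N T) hq cnt x w
     <= c0 * (INR ((T.-1 - p) * N) * A) by apply: Rmult_le_compat_l; lra.
  lra.
move=> Eh Ef B.
have eEf : Ef = Esp (P N T) (Yc cf) by apply: (@Esp_ext _ _ (HP N T)) => w _; apply: eF.
have eEh : Eh = Esp (P N T) (Yc ch) by apply: (@Esp_ext _ _ (HP N T)) => w _; apply: eH.
have hEf : c <= Ef by apply: HMf.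
have hEh : 0 <= Eh <= 2 * A.
  rewrite eEh; split.
    rewrite -(@Esp_const _ _ (HP N T) 0); apply: (@Esp_le _ _ (HP N T)) => w Pw.
    by case: (Ybnd ch bh w Pw).
  rewrite -(@Esp_const _ _ (HP N T) (2 * A)); apply: (@Esp_le _ _ (HP N T)) => w Pw.
  by case: (Ybnd ch bh w Pw).
apply: Rle_trans (@Prob_le_Esp _ _ (HP N T) _
   (fun w => ((fhat T p (G N T w) (f N T w) D (b N T) s hq - Ef) ^ 2 +
              (hhat T p (G N T w) (f N T w) D (b N T) s hq - Eh) ^ 2) / eta ^ 2) _) _.
  move=> w; cbv zeta; rewrite /B.
  exact: (det_bound _ _ Ef Eh (g s hq) c eps eta A hc hEf hEh heta heta2 hkey).
have VF := F2 cf fst pf bf.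
have VH := F2 ch snd ph bh.
rewrite -eEf in VF; rewrite -eEh in VH.
rewrite (@Esp_ext _ _ (HP N T) _ (fun w => / eta ^ 2 * ((Yc cf w - Ef) ^ 2 + (Yc ch w - Eh) ^ 2))); last first.
  by move=> w _; rewrite eF eH /Rdiv Rmult_comm.
rewrite Esp_scal Esp_add.
have he2 : 0 < eta ^ 2 by apply: pow_lt.
have -> : delta = / eta ^ 2 * (2 * V) by rewrite /V; field; lra.
apply: Rmult_le_compat_l; first by apply: Rlt_le; apply: Rinv_0_lt_compat.
lra.
Qed.
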